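(* Fix integers $n_0\le m\le n\le L-3$. Let $\sigma\in\Omega_L$ be a configuration with exactly $nm+1$ spins equal to $0$ and all other spins equal to $-1$, such that $nm$ of the $0$-spins form an $n\times m$ rectangle $Q$ and the remaining $0$-spin sits at a site $z\notin Q$ whose unique nearest neighbour in $Q$ is a corner of $Q$ (so that exactly one $-1$-spin has two $0$-spins as nearest neighbours). Let $\sigma_-$ be obtained from $\sigma$ by flipping the spin at $z$ to $-1$, and $\sigma_+$ by flipping to $0$ the unique $-1$-spin having two $0$-spins as neighbours. Then there exists a constant $C_0$ (depending only on $h$) such that $$\big|p_\beta(\sigma,\sigma_-)-\tfrac12\big|\le C_0\,\delta_1(\beta),\qquad \big|p_\beta(\sigma,\sigma_+)-\tfrac12\big|\le C_0\,\delta_1(\beta),$$ where $\delta_1(\beta)=e^{-h\beta}+|\Lambda_L|^{1/2}e^{-(2-h)\beta}+|\Lambda_L|e^{-(4-h)\beta}$.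
   Context: Blume–Capel model. Fix $h\in(0,1)$ with $2/h\notin\mathbb Z$, $n_0=\lfloor 2/h\rfloor$. $\Lambda_L$ is the two-dimensional discrete torus of side $L$, $\Omega_L=\{-1,0,1\}^{\Lambda_L}$. Hamiltonian $\mathbb H(\sigma)=\sum(\sigma(y)-\sigma(x))^2-h\sum_x\sigma(x)$, first sum over unordered nearest-neighbour pairs. $\sigma^{x,\pm}$: replace $\sigma(x)$ by $\sigma(x)\pm1$ modulo $3$ in $\{-1,0,1\}$. Jump rates $R_\beta(\sigma,\sigma^{x,\pm})=\exp\{-\beta[\mathbb H(\sigma^{x,\pm})-\mathbb H(\sigma)]_+\}$, holding rate $\lambda_\beta(\sigma)=\sum_{x,\pm}R_\beta(\sigma,\sigma^{x,\pm})$, and jump probabilities $p_\beta(\sigma,\sigma')=R_\beta(\sigma,\sigma')/\lambda_\beta(\sigma)$. *)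

(* Defs.v *)
From Stdlib Require Import Reals Lra Lia ZArith Arith List.
Import ListNotations.
Open Scope R_scope.

Definition site := (nat * nat)%type.
Definition sites (L : nat) : list site := list_prod (seq 0 L) (seq 0 L).

(* A configuration assigns a spin (an integer in {-1,0,1}) to each site;
   only its values on [sites L] matter. *)
Definition config := site -> Z.

Definition nbrs (L : nat) (x : site) : list site :=
  let (i, j) := x in
  [ (((i + 1) mod L)%nat, j); (((i + L - 1) mod L)%nat, j);
    (i, ((j + 1) mod L)%nat); (i, ((j + L - 1) mod L)%nat) ].

Definition adj (L : nat) (x y : site) : Prop := In y (nbrs L x).

Definition sumL (L : nat) (f : site -> R) : R :=
  fold_right Rplus 0 (map f (sites L)).

(* H(sigma) = sum over unordered n.n. pairs (sigma(y)-sigma(x))^2 - h sum_x sigma(x);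
   each unordered pair {x, x+e1}, {x, x+e2} is counted once. *)
Definition Ham (L : nat) (h : R) (s : config) : R :=
  sumL L (fun x =>
    let (i, j) := x in
    IZR ((s (((i + 1) mod L)%nat, j) - s (i, j)) ^ 2)%Z
    + IZR ((s (i, ((j + 1) mod L)%nat) - s (i, j)) ^ 2)%Z
    - h * IZR (s (i, j))).

(* sigma(x) +/- 1 modulo 3 in {-1,0,1}. *)
Definition spin_up (v : Z) : Z := if Z.eqb v 1 then (-1)%Z else (v + 1)%Z.
Definition spin_down (v : Z) : Z := if Z.eqb v (-1) then 1%Z else (v - 1)%Z.

Definition site_eqb (x y : site) : bool :=
  Nat.eqb (fst x) (fst y) && Nat.eqb (snd x) (snd y).

Definition update (s : config) (x : site) (v : Z) : config :=
  fun y => if site_eqb y x then v else s y.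

Definition flip_plus (s : config) (x : site) : config := update s x (spin_up (s x)).
Definition flip_minus (s : config) (x : site) : config := update s x (spin_down (s x)).

Definition rate (L : nat) (h beta : R) (s s' : config) : R :=
  exp (- beta * Rmax 0 (Ham L h s' - Ham L h s)).

Definition hold_rate (L : nat) (h beta : R) (s : config) : R :=
  sumL L (fun x => rate L h beta s (flip_plus s x) + rate L h beta s (flip_minus s x)).

Definition jump_prob (L : nat) (h beta : R) (s s' : config) : R :=
  rate L h beta s s' / hold_rate L h beta s.

Definition n0 (h : R) : nat := Z.to_nat (Int_part (2 / h)).

Definition delta1 (L : nat) (h beta : R) : R :=
  exp (- h * beta) + sqrt (INR (L * L)) * exp (- (2 - h) * beta)
  + INR (L * L) * exp (- (4 - h) * beta).

Definition inRect (L a b l1 l2 : nat) (x : site) : Prop :=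
  exists i j, (i < l1)%nat /\ (j < l2)%nat /\
    x = (((a + i) mod L)%nat, ((b + j) mod L)%nat).

Definition isCorner (L a b l1 l2 : nat) (c : site) : Prop :=
  exists i j, (i = 0 \/ i = l1 - 1)%nat /\ (j = 0 \/ j = l2 - 1)%nat /\
    c = (((a + i) mod L)%nat, ((b + j) mod L)%nat).

Definition n_zero_nbrs (L : nat) (s : config) (x : site) : nat :=
  length (filter (fun w => Z.eqb (s w) 0) (nbrs L x)).

(* Main.v *)
Require Import Defs.
From Stdlib Require Import Reals ZArith List.
From Stdlib Require Import Lra Lia Arith Bool Classical.
Import ListNotations.

Module GeoM.
Local Open Scope nat_scope.

Definition nup (L u : nat) := if u =? L-1 then 0 else u+1.
Definition ndn (L u : nat) := if u =? 0 then L-1 else u-1.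
Definition b2 (b : bool) : nat := if b then 1 else 0.
Definition Rb (l1 l2 p q : nat) : bool := (p <? l1) && (q <? l2).
Definition Eb (zu zv p q : nat) : bool := (p =? zu) && (q =? zv).
Definition kR L l1 l2 u v :=
  b2 (Rb l1 l2 (nup L u) v) + b2 (Rb l1 l2 (ndn L u) v) +
  b2 (Rb l1 l2 u (nup L v)) + b2 (Rb l1 l2 u (ndn L v)).
Definition kZ L zu zv u v :=
  b2 (Eb zu zv (nup L u) v) + b2 (Eb zu zv (ndn L u) v) +
  b2 (Eb zu zv u (nup L v)) + b2 (Eb zu zv u (ndn L v)).

Ltac atoms := repeat (match goal with
   | |- context[Nat.eqb ?a ?b] => destruct (Nat.eqb_spec a b)
   | |- context [Nat.ltb ?a ?b] => destruct (Nat.ltb_spec0 a b) end; try (exfalso; lia)).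

Lemma L_R_out L l1 l2 u v : 2 <= l1 -> 2 <= l2 -> l1 + 3 <= L -> l2 + 3 <= L -> u < L -> v < L ->
  ~ (u < l1 /\ v < l2) ->
  kR L l1 l2 u v <= 1 /\
  (kR L l1 l2 u v = 1 -> ((u = L-1 \/ u = l1) /\ v < l2) \/ ((v = L-1 \/ v = l2) /\ u < l1)).
Proof.
  intros. unfold kR, Rb, nup, ndn, b2. atoms; cbn [andb Nat.add]; lia.
Qed.

Lemma L_R_in L l1 l2 u v : 2 <= l1 -> 2 <= l2 -> l1 + 3 <= L -> l2 + 3 <= L -> u < L -> v < L ->
  u < l1 -> v < l2 ->
  2 <= kR L l1 l2 u v /\ (kR L l1 l2 u v = 2 -> (u = 0 \/ u = l1-1) /\ (v = 0 \/ v = l2-1)) /\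
  (kR L l1 l2 u v <= 3 -> u = 0 \/ u = l1-1 \/ v = 0 \/ v = l2-1).
Proof.
  intros. unfold kR, Rb, nup, ndn, b2. atoms; cbn [andb Nat.add]; lia.
Qed.

Lemma L_Z L zu zv u v : 3 <= L -> u < L -> v < L -> zu < L -> zv < L ->
  kZ L zu zv u v <= 1 /\
  (kZ L zu zv u v = 1 -> (nup L u = zu /\ v = zv) \/ (ndn L u = zu /\ v = zv) \/
       (u = zu /\ nup L v = zv) \/ (u = zu /\ ndn L v = zv)) /\
  (u = zu -> v = zv -> kZ L zu zv u v = 0).
Proof.
  intros. unfold kZ, Eb, nup, ndn, b2. atoms; cbn [andb Nat.add]; lia.
Qed.

Lemma L_Z2 L zu zv u v :
  ((nup L u = zu /\ v = zv) \/ (ndn L u = zu /\ v = zv) \/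
       (u = zu /\ nup L v = zv) \/ (u = zu /\ ndn L v = zv)) -> 1 <= kZ L zu zv u v.
Proof.
  unfold kZ, Eb, b2. intros [[H1 H2]|[[H1 H2]|[[H1 H2]|[H1 H2]]]]; rewrite H1, H2, !Nat.eqb_refl;
  cbn [andb]; lia.
Qed.

Definition bandP (L l1 l2 u v : nat) : Prop :=
  u = L-2 \/ u = L-1 \/ u = 0 \/ u = l1-1 \/ u = l1 \/ u = l1+1 \/
  v = L-2 \/ v = L-1 \/ v = 0 \/ v = l2-1 \/ v = l2 \/ v = l2+1.
Definition zposP (L l1 l2 zu zv y0u y0v : nat) : Prop :=
  ((zu = L-1 \/ zu = l1) /\ ((zv = 0 /\ y0v = 1) \/ (zv = l2-1 /\ y0v = l2-2)) /\ y0u = zu) \/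
  ((zv = L-1 \/ zv = l2) /\ ((zu = 0 /\ y0u = 1) \/ (zu = l1-1 /\ y0u = l1-2)) /\ y0v = zv).

Lemma Core L l1 l2 zu zv y0u y0v u v : 2 <= l1 -> 2 <= l2 -> l1 + 3 <= L -> l2 + 3 <= L -> u < L -> v < L ->
  zposP L l1 l2 zu zv y0u y0v ->
  ((nup L u = zu /\ v = zv) \/ (ndn L u = zu /\ v = zv) \/
       (u = zu /\ nup L v = zv) \/ (u = zu /\ ndn L v = zv)) ->
  bandP L l1 l2 u v /\
  (~ (u < l1 /\ v < l2) -> ((u = L-1 \/ u = l1) /\ v < l2) \/ ((v = L-1 \/ v = l2) /\ u < l1) ->
     u = y0u /\ v = y0v).
Proof.
  unfold zposP, bandP, nup, ndn. intros Hl1 Hl2 HL1 HL2 Hu Hv Hz Ha.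
  destruct Hz as [[Hzu [Hzv Hy']]|[Hzv [Hzu Hy']]];
  [destruct Hzu as [Hzu|Hzu]; destruct Hzv as [[Hzv Hy]|[Hzv Hy]]
  |destruct Hzv as [Hzv|Hzv]; destruct Hzu as [[Hzu Hy]|[Hzu Hy]]]; subst zu zv y0u y0v;
  destruct Ha as [[H1 H2]|[[H1 H2]|[[H1 H2]|[H1 H2]]]]; revert H1 H2;
  repeat match goal with |- context[Nat.eqb ?a ?b] => destruct (Nat.eqb_spec a b) end;
  intros H1 H2; (split; [lia| intros H3 H4; destruct H4 as [[[H4|H4] H5]|[[H4|H4] H5]]; lia]).
Qed.

Lemma L_R2 L l1 l2 u v :
  ((nup L u < l1 /\ v < l2) \/ (ndn L u < l1 /\ v < l2) \/
       (u < l1 /\ nup L v < l2) \/ (u < l1 /\ ndn L v < l2)) -> 1 <= kR L l1 l2 u v.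
Proof.
  unfold kR, Rb, b2. intros [[H1 H2]|[[H1 H2]|[[H1 H2]|[H1 H2]]]];
  apply Nat.ltb_lt in H1; apply Nat.ltb_lt in H2; rewrite H1, H2; cbn [andb]; lia.
Qed.

Lemma Core_y0 L l1 l2 zu zv y0u y0v : 2 <= l1 -> 2 <= l2 -> l1 + 3 <= L -> l2 + 3 <= L ->
  zposP L l1 l2 zu zv y0u y0v ->
  y0u < L /\ y0v < L /\ zu < L /\ zv < L /\ ~ (zu < l1 /\ zv < l2) /\ ~ (y0u < l1 /\ y0v < l2) /\
  ~ (y0u = zu /\ y0v = zv) /\ 1 <= kR L l1 l2 y0u y0v /\
  ((nup L y0u = zu /\ y0v = zv) \/ (ndn L y0u = zu /\ y0v = zv) \/
       (y0u = zu /\ nup L y0v = zv) \/ (y0u = zu /\ ndn L y0v = zv)).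
Proof.
  intros Hl1 Hl2 HL1 HL2 Hz.
  unfold zposP in Hz.
  destruct Hz as [[Hzu [Hzv Hy']]|[Hzv [Hzu Hy']]];
  [destruct Hzu as [Hzu|Hzu]; destruct Hzv as [[Hzv Hy]|[Hzv Hy]]
  |destruct Hzv as [Hzv|Hzv]; destruct Hzu as [[Hzu Hy]|[Hzu Hy]]]; subst zu zv y0u y0v;
  (split; [lia|]); (split; [lia|]); (split; [lia|]); (split; [lia|]); (split; [lia|]);
  (split; [lia|]); (split; [lia|]).
  all: (split; [apply L_R2|]); unfold nup, ndn.
  all: (repeat match goal with |- context[Nat.eqb ?a ?b] => destruct (Nat.eqb_spec a b) end; lia).
Qed.

End GeoM.
Import GeoM.

Open Scope R_scope.

Lemma mod_cases (t L : nat) : (0 < L)%nat -> (t < 2 * L)%nat ->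
  ((t < L)%nat /\ t mod L = t) \/ ((L <= t)%nat /\ t mod L = (t - L)%nat).
Proof.
  intros HL Ht. destruct (Nat.lt_ge_cases t L) as [H|H].
  - left. split; [lia|]. apply Nat.mod_small; lia.
  - right. split; [lia|].
    replace t with ((t - L) + 1 * L)%nat at 1 by lia.
    rewrite Nat.Div0.mod_add. apply Nat.mod_small; lia.
Qed.

Definition sl {A} (l : list A) (f : A -> R) : R := fold_right Rplus 0 (map f l).

Lemma sl_app {A} (l1 l2 : list A) f : sl (l1 ++ l2) f = sl l1 f + sl l2 f.
Proof. unfold sl. rewrite map_app, fold_right_app. induction l1; simpl; [lra|].
  unfold sl in *. simpl in *. rewrite IHl1. lra. Qed.

Lemma sl_prod {A B} (l1 : list A) (l2 : list B) f :
  sl (list_prod l1 l2) f = sl l1 (fun i => sl l2 (fun j => f (i, j))).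
Proof.
  induction l1; simpl; [reflexivity|].
  rewrite sl_app. rewrite IHl1. unfold sl at 1. rewrite map_map. simpl. reflexivity.
Qed.

Lemma sumL_sl L f : sumL L f = sl (seq 0 L) (fun i => sl (seq 0 L) (fun j => f (i, j))).
Proof. change (sl (sites L) f = sl (seq 0 L) (fun i => sl (seq 0 L) (fun j => f (i, j)))). unfold sites; apply sl_prod. Qed.

Lemma sl_ext {A} (l : list A) f g : (forall x, In x l -> f x = g x) -> sl l f = sl l g.
Proof. intros H; induction l; simpl; auto. unfold sl in *; simpl. rewrite H by (simpl; auto).
  rewrite IHl; auto. intros; apply H; simpl; auto. Qed.

Lemma sl_le {A} (l : list A) f g : (forall x, In x l -> f x <= g x) -> sl l f <= sl l g.
Proof. intros H; induction l; simpl; unfold sl in *; simpl; [lra|].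
  apply Rplus_le_compat. apply H; simpl; auto. apply IHl. intros; apply H; simpl; auto. Qed.

Lemma sl_plus {A} (l : list A) f g : sl l (fun x => f x + g x) = sl l f + sl l g.
Proof. induction l; unfold sl in *; simpl; [lra|]. rewrite IHl. lra. Qed.

Lemma sl_scal {A} (l : list A) c f : sl l (fun x => c * f x) = c * sl l f.
Proof. induction l; unfold sl in *; simpl; [lra|]. rewrite IHl. lra. Qed.

Lemma sl_const {A} (l : list A) c : sl l (fun _ => c) = INR (length l) * c.
Proof. induction l; unfold sl in *; simpl; [lra|]. rewrite IHl.
  destruct (length l); simpl; lra. Qed.

Lemma sl_seq_ind s n p : sl (seq s n) (fun i => if Nat.eqb i p then 1 else 0) =
  if (andb (Nat.leb s p) (Nat.ltb p (s + n))) then 1 else 0.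
Proof.
  revert s; induction n; intros s.
  - unfold sl; simpl. destruct (Nat.leb s p) eqn:E1; destruct (Nat.ltb p (s+0)) eqn:E2; simpl; try reflexivity.
    apply Nat.leb_le in E1; apply Nat.ltb_lt in E2; lia.
  - unfold sl in *; cbn [seq map fold_right]. rewrite IHn.
    repeat match goal with |- context[Nat.eqb ?a ?b] => destruct (Nat.eqb_spec a b)
      | |- context [Nat.leb ?a ?b] => destruct (Nat.leb_spec0 a b)
      | |- context [Nat.ltb ?a ?b] => destruct (Nat.ltb_spec0 a b) end; simpl; try lra; lia.
Qed.

Lemma sl_seq0_ind L p : (p < L)%nat -> sl (seq 0 L) (fun i => if Nat.eqb i p then 1 else 0) = 1.
Proof. intros. rewrite sl_seq_ind. replace (Nat.leb 0 p) with true by (symmetry; apply Nat.leb_le; lia).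
  replace (Nat.ltb p (0+L)) with true by (symmetry; apply Nat.ltb_lt; lia). reflexivity. Qed.

Lemma sl_seq0_ind_le L p : sl (seq 0 L) (fun i => if Nat.eqb i p then 1 else 0) <= 1.
Proof. rewrite sl_seq_ind. destruct (_ && _)%bool; lra. Qed.

Lemma sl_nonneg {A} (l : list A) f : (forall x, In x l -> 0 <= f x) -> 0 <= sl l f.
Proof. intros H. induction l; unfold sl in *; simpl; [lra|].
  apply Rplus_le_le_0_compat. apply H; simpl; auto. apply IHl; intros; apply H; simpl; auto. Qed.

Definition delta (x p : site) : R := if site_eqb x p then 1 else 0.

Lemma sumL_delta L p : In p (sites L) -> sumL L (fun x => delta x p) = 1.
Proof.
  intros Hp. unfold sites in Hp. destruct p as [pi pj]. apply in_prod_iff in Hp as [H1 H2].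
  apply in_seq in H1; apply in_seq in H2.
  rewrite sumL_sl. unfold delta, site_eqb; simpl.
  rewrite (sl_ext _ _ (fun i => (if Nat.eqb i pi then 1 else 0) * sl (seq 0 L) (fun j => if Nat.eqb j pj then 1 else 0))).
  - rewrite sl_seq0_ind by lia. rewrite (sl_ext _ _ (fun i => (if Nat.eqb i pi then 1 else 0))).
    apply sl_seq0_ind; lia. intros; lra.
  - intros i _. rewrite <- sl_scal. apply sl_ext. intros j _.
    destruct (Nat.eqb i pi), (Nat.eqb j pj); simpl; lra.
Qed.

Lemma sumL_row L p : sumL L (fun x => if Nat.eqb (fst x) p then 1 else 0) <= INR L.
Proof.
  rewrite sumL_sl. simpl.
  rewrite (sl_ext _ _ (fun i => INR L * (if Nat.eqb i p then 1 else 0))).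
  - rewrite sl_scal. pose proof (sl_seq0_ind_le L p). pose proof (pos_INR L). nra.
  - intros i _. rewrite sl_const, length_seq. reflexivity.
Qed.

Lemma sumL_col L p : sumL L (fun x => if Nat.eqb (snd x) p then 1 else 0) <= INR L.
Proof.
  rewrite sumL_sl. simpl.
  eapply Rle_trans. apply sl_le. intros; apply sl_seq0_ind_le.
  rewrite sl_const, length_seq. lra.
Qed.

Lemma sumL_const L c : sumL L (fun _ => c) = INR L * INR L * c.
Proof. rewrite sumL_sl. rewrite (sl_ext _ _ (fun _ => INR L * c)).
  rewrite sl_const, length_seq. lra. intros; rewrite sl_const, length_seq; reflexivity. Qed.

Lemma sumL_plus L f g : sumL L (fun x => f x + g x) = sumL L f + sumL L g.
Proof. unfold sumL. apply (sl_plus (sites L)). Qed.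
Lemma sumL_scal L c f : sumL L (fun x => c * f x) = c * sumL L f.
Proof. unfold sumL. apply (sl_scal (sites L)). Qed.
Lemma sumL_le L f g : (forall x, In x (sites L) -> f x <= g x) -> sumL L f <= sumL L g.
Proof. unfold sumL. apply (sl_le (sites L)). Qed.
Lemma sumL_ext L f g : (forall x, In x (sites L) -> f x = g x) -> sumL L f = sumL L g.
Proof. unfold sumL. apply (sl_ext (sites L)). Qed.
Lemma sumL_minus L f g : sumL L f - sumL L g = sumL L (fun x => f x - g x).
Proof. unfold Rminus. rewrite <- (Rmult_1_l (sumL L g)), Ropp_mult_distr_l, <- sumL_scal, <- sumL_plus.
  apply sumL_ext; intros; lra. Qed.

Ltac bdestr := repeat match goal with |- context[Nat.eqb ?a ?b] => destruct (Nat.eqb_spec a b)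
      | |- context [Nat.leb ?a ?b] => destruct (Nat.leb_spec0 a b)
      | |- context [Nat.ltb ?a ?b] => destruct (Nat.ltb_spec0 a b) end.

Ltac izr := repeat (rewrite ?Z.pow_2_r, ?mult_IZR, ?minus_IZR, ?plus_IZR, ?opp_IZR).

Lemma succ_mod i L : (0 < L)%nat -> (i < L)%nat ->
  ((i + 1) mod L = (i+1)%nat /\ (i + 1 < L)%nat) \/ (i = (L - 1)%nat /\ (i + 1) mod L = 0%nat).
Proof. intros. destruct (mod_cases (i+1) L) as [[? ?]|[? ?]]; lia. Qed.

Lemma pred_mod i L : (0 < L)%nat -> (i < L)%nat ->
  ((i + L - 1) mod L = (i-1)%nat /\ (0 < i)%nat) \/ (i = 0%nat /\ (i + L - 1) mod L = (L-1)%nat).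
Proof. intros. destruct (mod_cases (i+L-1) L) as [[? ?]|[? ?]]; lia. Qed.

Lemma ham_local L h s x v : (3 <= L)%nat -> In x (sites L) ->
  Ham L h (update s x v) - Ham L h s =
  sl (nbrs L x) (fun w => IZR ((s w - v)^2) - IZR ((s w - s x)^2)) - h * (IZR v - IZR (s x)).
Proof.
  intros HL Hx. destruct x as [xi xj].
  unfold sites in Hx. apply in_prod_iff in Hx as [Hxi Hxj]. apply in_seq in Hxi, Hxj.
  set (xim := ((xi + L - 1) mod L)%nat). set (xjm := ((xj + L - 1) mod L)%nat).
  set (A := IZR ((s (((xi+1) mod L)%nat, xj) - v)^2) - IZR ((s (((xi+1) mod L)%nat, xj) - s (xi,xj))^2)
          + (IZR ((s (xi, ((xj+1) mod L)%nat) - v)^2) - IZR ((s (xi, ((xj+1) mod L)%nat) - s (xi,xj))^2))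
          - h * (IZR v - IZR (s (xi,xj)))).
  set (B := IZR ((v - s (xim, xj))^2) - IZR ((s (xi,xj) - s (xim,xj))^2)).
  set (C := IZR ((v - s (xi, xjm))^2) - IZR ((s (xi,xj) - s (xi,xjm))^2)).
  transitivity (sumL L (fun y => delta y (xi,xj) * A + delta y (xim,xj) * B + delta y (xi,xjm) * C)).
  - unfold Ham. rewrite sumL_minus. apply sumL_ext.
    intros [i j] Hin. apply in_prod_iff in Hin as [Hi Hj]. apply in_seq in Hi, Hj.
    unfold delta, update, site_eqb; cbn [fst snd].
    assert (F1 := succ_mod i L ltac:(lia) ltac:(lia)).
    assert (F2 := succ_mod j L ltac:(lia) ltac:(lia)).
    assert (F3 := pred_mod xi L ltac:(lia) ltac:(lia)).
    assert (F4 := pred_mod xj L ltac:(lia) ltac:(lia)).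
    assert (F5 := succ_mod xi L ltac:(lia) ltac:(lia)).
    assert (F6 := succ_mod xj L ltac:(lia) ltac:(lia)).
    unfold A, B, C, xim, xjm in *. clear A B C xim xjm.
    remember ((i+1) mod L)%nat as i1. remember ((j+1) mod L)%nat as j1.
    remember ((xi+L-1) mod L)%nat as xim. remember ((xj+L-1) mod L)%nat as xjm.
    remember ((xi+1) mod L)%nat as xi1. remember ((xj+1) mod L)%nat as xj1.
    clear Heqi1 Heqj1 Heqxim Heqxjm Heqxi1 Heqxj1.
    bdestr; cbn [andb]; try (exfalso; lia); subst; izr; try ring;
    repeat match goal with a : nat, b : nat |- _ =>
      assert (a = b) by lia; subst b end; ring.
  - rewrite !sumL_plus.
    rewrite (sumL_ext L (fun y => delta y (xi,xj) * A) (fun y => A * delta y (xi,xj))) by (intros; ring).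
    rewrite (sumL_ext L (fun y => delta y (xim,xj) * B) (fun y => B * delta y (xim,xj))) by (intros; ring).
    rewrite (sumL_ext L (fun y => delta y (xi,xjm) * C) (fun y => C * delta y (xi,xjm))) by (intros; ring).
    rewrite !sumL_scal.
    assert (F3 := pred_mod xi L ltac:(lia) ltac:(lia)).
    assert (F4 := pred_mod xj L ltac:(lia) ltac:(lia)).
    rewrite !sumL_delta; try (unfold sites; apply in_prod; apply in_seq; unfold xim, xjm; lia).
    unfold A, B, C, nbrs, sl, xim, xjm; cbn [map fold_right]. izr. ring.
Qed.

Lemma nbrs_in L x w : (0 < L)%nat -> In x (sites L) -> In w (nbrs L x) -> In w (sites L).
Proof.
  intros HL Hx Hw. destruct x as [i j]. unfold sites in *. apply in_prod_iff in Hx as [Hi Hj].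
  apply in_seq in Hi, Hj.
  assert (forall t, (t mod L < L)%nat) by (intros; apply Nat.mod_upper_bound; lia).
  simpl in Hw. repeat destruct Hw as [Hw|Hw]; subst; try contradiction;
  apply in_prod; apply in_seq; split; try lia; apply H.
Qed.

Lemma dH_formula L h s x v : (3 <= L)%nat -> In x (sites L) ->
  (forall w, In w (sites L) -> s w = 0%Z \/ s w = (-1)%Z) ->
  Ham L h (update s x v) - Ham L h s =
  INR (n_zero_nbrs L s x) * (IZR v ^ 2 - IZR (s x) ^ 2)
  + (4 - INR (n_zero_nbrs L s x)) * ((1 + IZR v) ^ 2 - (1 + IZR (s x)) ^ 2)
  - h * (IZR v - IZR (s x)).
Proof.
  intros HL Hx Hs. rewrite ham_local by auto.
  assert (Hn : forall w, In w (nbrs L x) -> s w = 0%Z \/ s w = (-1)%Z)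
    by (intros; apply Hs; eapply nbrs_in; eauto; lia).
  unfold n_zero_nbrs. destruct x as [i j]. unfold nbrs in *.
  set (w1 := (((i + 1) mod L)%nat, j)) in *.
  set (w2 := (((i + L - 1) mod L)%nat, j)) in *.
  set (w3 := (i, ((j + 1) mod L)%nat)) in *.
  set (w4 := (i, ((j + L - 1) mod L)%nat)) in *.
  assert (H1 := Hn w1 ltac:(simpl; auto)).
  assert (H2 := Hn w2 ltac:(simpl; auto)).
  assert (H3 := Hn w3 ltac:(simpl; auto)).
  assert (H4 := Hn w4 ltac:(simpl; auto)).
  clearbody w1 w2 w3 w4. unfold sl. cbn [map fold_right filter].
  destruct H1 as [H1|H1]; destruct H2 as [H2|H2]; destruct H3 as [H3|H3]; destruct H4 as [H4|H4];
  rewrite ?H1, ?H2, ?H3, ?H4; cbn [Z.eqb length filter INR]; izr; simpl IZR; ring.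
Qed.

Lemma exp_le x y : x <= y -> exp x <= exp y.
Proof. intros [H|H]; [left; apply exp_increasing; auto| subst; lra]. Qed.

Lemma rate_one L h beta s s' : Ham L h s' - Ham L h s <= 0 -> rate L h beta s s' = 1.
Proof. intros H. unfold rate. rewrite Rmax_left by lra. rewrite Rmult_0_r. apply exp_0. Qed.

Lemma rate_le L h beta s s' c : 0 <= beta -> c <= Ham L h s' - Ham L h s ->
  rate L h beta s s' <= exp (- c * beta).
Proof. intros Hb H. unfold rate. apply exp_le.
  assert (c <= Rmax 0 (Ham L h s' - Ham L h s)) by (eapply Rle_trans; [exact H| apply Rmax_r]).
  nra. Qed.

Lemma rate_pos L h beta s s' : 0 < rate L h beta s s'.
Proof. apply exp_pos. Qed.

Definition cu (L a i : nat) : nat := ((i + L - a) mod L)%nat.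

Lemma cu_val L a i : (a < L)%nat -> (i < L)%nat ->
  ((a <= i)%nat /\ cu L a i = (i - a)%nat) \/ ((i < a)%nat /\ cu L a i = (i + L - a)%nat).
Proof. intros. unfold cu. destruct (mod_cases (i + L - a) L) as [[? ?]|[? ?]]; lia. Qed.

Lemma cu_lt L a i : (a < L)%nat -> (i < L)%nat -> (cu L a i < L)%nat.
Proof. intros. destruct (cu_val L a i) as [[? ?]|[? ?]]; lia. Qed.

Lemma cu_up L a i : (a < L)%nat -> (i < L)%nat -> (cu L a ((i + 1) mod L) = nup L (cu L a i))%nat.
Proof.
  intros. unfold nup. destruct (succ_mod i L) as [[E1 E2]|[E1 E2]]; try lia; [rewrite E1|rewrite E2].
  - destruct (cu_val L a (i+1)) as [[? ?]|[? ?]]; destruct (cu_val L a i) as [[? ?]|[? ?]];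
    try lia; destruct (Nat.eqb_spec (cu L a i) (L-1)); lia.
  - destruct (cu_val L a 0) as [[? ?]|[? ?]]; destruct (cu_val L a i) as [[? ?]|[? ?]];
    try lia; destruct (Nat.eqb_spec (cu L a i) (L-1)); lia.
Qed.

Lemma cu_dn L a i : (a < L)%nat -> (i < L)%nat -> (cu L a ((i + L - 1) mod L) = ndn L (cu L a i))%nat.
Proof.
  intros. unfold ndn. destruct (pred_mod i L) as [[E1 E2]|[E1 E2]]; try lia; [rewrite E1|].
  - destruct (cu_val L a (i-1)) as [[? ?]|[? ?]]; destruct (cu_val L a i) as [[? ?]|[? ?]];
    try lia; destruct (Nat.eqb_spec (cu L a i) 0); lia.
  - rewrite E2. destruct (cu_val L a (L-1)) as [[? ?]|[? ?]]; destruct (cu_val L a i) as [[? ?]|[? ?]];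
    try lia; destruct (Nat.eqb_spec (cu L a i) 0); lia.
Qed.

Lemma cu_inj L a i i' : (a < L)%nat -> (i < L)%nat -> (i' < L)%nat -> cu L a i = cu L a i' -> i = i'.
Proof. intros. destruct (cu_val L a i) as [[? ?]|[? ?]]; destruct (cu_val L a i') as [[? ?]|[? ?]]; lia. Qed.

Lemma addmod_lt L a t : (0 < L)%nat -> ((a + t) mod L < L)%nat.
Proof. intros; apply Nat.mod_upper_bound; lia. Qed.

Lemma cu_inv L a t : (a < L)%nat -> (t < L)%nat -> (cu L a ((a + t) mod L) = t)%nat.
Proof.
  intros. destruct (mod_cases (a + t) L) as [[? E]|[? E]]; try lia; rewrite E.
  - destruct (cu_val L a (a+t)) as [[? ?]|[? ?]]; lia.
  - destruct (cu_val L a (a + t - L)) as [[? ?]|[? ?]]; lia.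
Qed.

Lemma cu_inv2 L a i : (a < L)%nat -> (i < L)%nat -> i = ((a + cu L a i) mod L)%nat.
Proof. intros. apply (cu_inj L a); auto. apply addmod_lt; lia. rewrite cu_inv; auto. apply cu_lt; auto. Qed.

Lemma inRect_iff L a b l1 l2 i j : (a < L)%nat -> (b < L)%nat -> (i < L)%nat -> (j < L)%nat ->
  (l1 <= L)%nat -> (l2 <= L)%nat ->
  (inRect L a b l1 l2 (i, j) <-> (cu L a i < l1)%nat /\ (cu L b j < l2)%nat).
Proof.
  intros. unfold inRect. split.
  - intros [i0 [j0 [K1 [K2 K3]]]]. inversion K3; subst. rewrite !cu_inv by lia. lia.
  - intros [K1 K2]. exists (cu L a i), (cu L b j). split; [lia|]. split; [lia|].
    f_equal; apply cu_inv2; lia.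
Qed.

Definition CFG L a b l1 l2 (z : site) (s : config) :=
  forall x, In x (sites L) ->
       ((inRect L a b l1 l2 x \/ x = z) -> s x = 0%Z) /\
       (~ (inRect L a b l1 l2 x \/ x = z) -> s x = (-1)%Z).

Lemma in_sites L i j : In (i, j) (sites L) <-> (i < L)%nat /\ (j < L)%nat.
Proof. unfold sites. rewrite in_prod_iff, !in_seq. lia. Qed.

Lemma zero_char L a b l1 l2 zi zj s wi wj :
  (a < L)%nat -> (b < L)%nat -> (l1 <= L)%nat -> (l2 <= L)%nat -> (zi < L)%nat -> (zj < L)%nat ->
  ~ inRect L a b l1 l2 (zi, zj) -> CFG L a b l1 l2 (zi, zj) s -> (wi < L)%nat -> (wj < L)%nat ->
  b2 (Z.eqb (s (wi, wj)) 0) =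
  (b2 (Rb l1 l2 (cu L a wi) (cu L b wj)) + b2 (Eb (cu L a zi) (cu L b zj) (cu L a wi) (cu L b wj)))%nat.
Proof.
  intros Ha Hb Hl1 Hl2 Hzi Hzj Hz Hs Hwi Hwj.
  destruct (Hs (wi, wj)) as [H0 H1]; [apply in_sites; lia|].
  rewrite inRect_iff in Hz, H0, H1 by lia.
  unfold b2, Rb, Eb.
  destruct (Nat.ltb_spec0 (cu L a wi) l1); destruct (Nat.ltb_spec0 (cu L b wj) l2);
  destruct (Nat.eqb_spec (cu L a wi) (cu L a zi)); destruct (Nat.eqb_spec (cu L b wj) (cu L b zj));
  cbn [andb orb];
  destruct (Z.eqb_spec (s (wi, wj)) 0) as [E|E]; cbn; try reflexivity; exfalso;
  first [ lia | apply E; apply H0; first [left; split; assumption | right; f_equal; [apply (cu_inj L a) | apply (cu_inj L b)]; assumption]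
        | rewrite H1 in E; [discriminate|]; intros [[? ?]|E']; [tauto| inversion E'; subst; tauto] ].
Qed.

Lemma length_filter4 {A} (f : A -> bool) w1 w2 w3 w4 :
  length (filter f [w1; w2; w3; w4]) = (b2 (f w1) + b2 (f w2) + b2 (f w3) + b2 (f w4))%nat.
Proof. simpl. unfold b2. destruct (f w1), (f w2), (f w3), (f w4); reflexivity. Qed.

Lemma nz_count L a b l1 l2 zi zj s i j :
  (3 <= L)%nat -> (a < L)%nat -> (b < L)%nat -> (l1 <= L)%nat -> (l2 <= L)%nat -> (zi < L)%nat -> (zj < L)%nat ->
  ~ inRect L a b l1 l2 (zi, zj) -> CFG L a b l1 l2 (zi, zj) s -> (i < L)%nat -> (j < L)%nat ->
  n_zero_nbrs L s (i, j) =
  (kR L l1 l2 (cu L a i) (cu L b j) + kZ L (cu L a zi) (cu L b zj) (cu L a i) (cu L b j))%nat.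
Proof.
  intros. unfold n_zero_nbrs, nbrs. rewrite length_filter4.
  assert (forall t, (t mod L < L)%nat) by (intros; apply Nat.mod_upper_bound; lia).
  rewrite !(zero_char L a b l1 l2 zi zj) by auto.
  rewrite !cu_up, !cu_dn by auto. unfold kR, kZ. lia.
Qed.

Lemma nz_le4 L s x : (n_zero_nbrs L s x <= 4)%nat.
Proof. unfold n_zero_nbrs, nbrs. destruct x. rewrite length_filter4. unfold b2.
  repeat match goal with |- context [if ?c then _ else _] => destruct c end; lia. Qed.

Lemma classify L a b l1 l2 zi zj y0u y0v s i j :
  (a < L)%nat -> (b < L)%nat -> (2 <= l1)%nat -> (2 <= l2)%nat -> (l1 + 3 <= L)%nat -> (l2 + 3 <= L)%nat ->
  (zi < L)%nat -> (zj < L)%nat ->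
  ~ inRect L a b l1 l2 (zi, zj) -> CFG L a b l1 l2 (zi, zj) s ->
  zposP L l1 l2 (cu L a zi) (cu L b zj) y0u y0v ->
  (i < L)%nat -> (j < L)%nat ->
  let k := n_zero_nbrs L s (i, j) in
  let u := cu L a i in let v := cu L b j in
  let y0 := (((a + y0u) mod L)%nat, ((b + y0v) mod L)%nat) in
  ((i, j) = (zi, zj) -> s (i, j) = 0%Z /\ (k <= 1)%nat) /\
  ((i, j) = y0 -> s (i, j) = (-1)%Z /\ k = 2%nat) /\
  ((i, j) <> (zi, zj) -> (i, j) <> y0 -> s (i, j) = (-1)%Z ->
      (k <= 1)%nat /\ (k = 1%nat -> bandP L l1 l2 u v)) /\
  ((i, j) <> (zi, zj) -> s (i, j) = 0%Z ->
      (2 <= k)%nat /\ (k = 2%nat -> (u = 0 \/ u = l1 - 1)%nat /\ (v = 0 \/ v = l2 - 1)%nat) /\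
      ((k <= 3)%nat -> bandP L l1 l2 u v)).
Proof.
  intros Ha Hb Hl1 Hl2 HL1 HL2 Hzi Hzj Hz Hs Hzp Hi Hj k u v y0.
  assert (HY := Core_y0 L l1 l2 _ _ _ _ Hl1 Hl2 HL1 HL2 Hzp).
  destruct HY as [Y1 [Y2 [Y3 [Y4 [Y5 [Y6 [Y7 [Y8 Y9]]]]]]]].
  assert (Hk : k = (kR L l1 l2 u v + kZ L (cu L a zi) (cu L b zj) u v)%nat)
    by (unfold k, u, v; apply nz_count; auto; lia).
  destruct (Hs (i, j)) as [S0 S1]; [apply in_sites; auto|].
  rewrite inRect_iff in S0, S1, Hz by lia. fold u v in S0, S1.
  assert (HZ := L_Z L (cu L a zi) (cu L b zj) u v ltac:(lia) ltac:(apply cu_lt; lia) ltac:(apply cu_lt; lia) Y3 Y4).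
  assert (Hu : (u < L)%nat) by (apply cu_lt; lia). assert (Hv : (v < L)%nat) by (apply cu_lt; lia).
  split; [|split; [|split]].
  - intros E. inversion E; subst i j. split; [apply S0; right; reflexivity|].
    destruct (L_R_out L l1 l2 u v Hl1 Hl2 HL1 HL2 Hu Hv) as [R1 R2]; [unfold u, v; exact Hz|].
    destruct HZ as [_ [_ HZ3]]. rewrite HZ3 in Hk by reflexivity. rewrite Hk. clear - R1. lia.
  - intros E. unfold y0 in E. inversion E as [[Ei Ej]].
    assert (Eu : u = y0u) by (unfold u; rewrite Ei; apply cu_inv; lia).
    assert (Ev : v = y0v) by (unfold v; rewrite Ej; apply cu_inv; lia).
    rewrite Eu, Ev in *. split.
    + try rewrite <- Ei, <- Ej. apply S1. intros [[? ?]|E']; [tauto|]. inversion E' as [[Ei' Ej']]. apply Y7.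
      split; [rewrite <- Eu; unfold u; rewrite Ei'; reflexivity | rewrite <- Ev; unfold v; rewrite Ej'; reflexivity].
    + destruct (L_R_out L l1 l2 y0u y0v Hl1 Hl2 HL1 HL2 Y1 Y2 Y6) as [R1 R2].
      assert (Z1 := L_Z2 L _ _ _ _ Y9). destruct HZ as [HZ1 _].
      rewrite Hk. clear - R1 Y8 Z1 HZ1. lia.
  - intros Nz Ny Sm.
    assert (NR : ~ ((u < l1)%nat /\ (v < l2)%nat)) by (intros HR; rewrite S0 in Sm by (left; exact HR); discriminate).
    destruct (L_R_out L l1 l2 u v Hl1 Hl2 HL1 HL2 Hu Hv NR) as [R1 R2].
    destruct HZ as [HZ1 [HZ2 _]].
    destruct (Nat.eq_dec (kZ L (cu L a zi) (cu L b zj) u v) 1) as [K1|K1].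
    + destruct (Core L l1 l2 _ _ _ _ u v Hl1 Hl2 HL1 HL2 Hu Hv Hzp (HZ2 K1)) as [C1 C2].
      destruct (Nat.eq_dec (kR L l1 l2 u v) 0) as [K0|K0].
      * split; [rewrite Hk; clear - K0 K1; lia|]. intros _. exact C1.
      * exfalso. destruct (C2 NR (R2 ltac:(clear - R1 K0; lia))) as [E1 E2]. apply Ny. unfold y0.
        rewrite <- E1, <- E2. unfold u, v. f_equal; apply cu_inv2; lia.
    + split; [rewrite Hk; clear - R1 HZ1 K1; lia|]. intros K.
      assert (K' : kR L l1 l2 u v = 1%nat) by (rewrite Hk in K; clear - K K1 HZ1; lia).
      destruct (R2 K') as [[[B|B] _]|[[B|B] _]]; unfold bandP; clear - B; lia.
  - intros Nz S0'.
    assert (HR : (u < l1)%nat /\ (v < l2)%nat).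
    { destruct (Nat.ltb_spec0 u l1); destruct (Nat.ltb_spec0 v l2); try (split; assumption);
      exfalso; rewrite S1 in S0'; try discriminate; intros [[? ?]|?]; auto. }
    destruct (L_R_in L l1 l2 u v Hl1 Hl2 HL1 HL2 Hu Hv (proj1 HR) (proj2 HR)) as [I1 [I2 I3]].
    destruct HZ as [HZ1 _].
    split; [rewrite Hk; clear - I1; lia|]. split.
    + intros K. apply I2. rewrite Hk in K. clear - K I1. lia.
    + intros K. assert (K3 : (kR L l1 l2 u v <= 3)%nat) by (rewrite Hk in K; clear - K; lia).
      destruct (I3 K3) as [B|[B|[B|B]]]; unfold bandP; clear - B; lia.
Qed.

Lemma n0_ge2 h : 0 < h < 1 -> (2 <= n0 h)%nat.
Proof.
  intros Hh. unfold n0, Int_part. destruct (archimed (2 / h)) as [H1 H2].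
  assert (2 / h > 2). { apply Rmult_lt_reg_r with h; [lra|]. unfold Rdiv. rewrite Rmult_assoc, Rinv_l by lra. lra. }
  assert (IZR (up (2/h)) > 2) by lra.
  apply lt_IZR in H0. lia.
Qed.

Lemma zpos_exists L l1 l2 zu zv cu' cv' :
  (2 <= l1)%nat -> (2 <= l2)%nat -> (l1 + 3 <= L)%nat -> (l2 + 3 <= L)%nat -> (zu < L)%nat -> (zv < L)%nat ->
  (cu' = 0 \/ cu' = l1 - 1)%nat -> (cv' = 0 \/ cv' = l2 - 1)%nat ->
  ((cu' = nup L zu /\ cv' = zv) \/ (cu' = ndn L zu /\ cv' = zv) \/
   (cu' = zu /\ cv' = nup L zv) \/ (cu' = zu /\ cv' = ndn L zv))%nat ->
  ~ ((zu < l1)%nat /\ (zv < l2)%nat) ->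
  exists y0u y0v, zposP L l1 l2 zu zv y0u y0v.
Proof.
  intros Hl1 Hl2 HL1 HL2 Hzu Hzv Hc1 Hc2 Had HnR. assert (D : (((zu = L-1 \/ zu = l1) /\ (zv = 0 \/ zv = l2-1)) \/
                     ((zv = L-1 \/ zv = l2) /\ (zu = 0 \/ zu = l1-1)))%nat).
  { unfold nup, ndn in *.
    destruct Had as [[E1 E2]|[[E1 E2]|[[E1 E2]|[E1 E2]]]]; revert E1 E2;
    repeat match goal with |- context[Nat.eqb ?a ?b] => destruct (Nat.eqb_spec a b) end; lia. }
  unfold zposP.
  destruct D as [[D1 [D2|D2]]|[D1 [D2|D2]]].
  - exists zu, 1%nat. left. split; [exact D1|]. split; [left; split; [exact D2|reflexivity]|reflexivity].
  - exists zu, (l2-2)%nat. left. split; [exact D1|]. split; [right; split; [exact D2|reflexivity]|reflexivity].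
  - exists 1%nat, zv. right. split; [exact D1|]. split; [left; split; [exact D2|reflexivity]|reflexivity].
  - exists (l1-2)%nat, zv. right. split; [exact D1|]. split; [right; split; [exact D2|reflexivity]|reflexivity].
Qed.

Lemma dH_m1 L h s x : (3 <= L)%nat -> In x (sites L) ->
  (forall w, In w (sites L) -> s w = 0%Z \/ s w = (-1)%Z) -> s x = (-1)%Z ->
  Ham L h (flip_plus s x) - Ham L h s = 4 - 2 * INR (n_zero_nbrs L s x) - h /\
  Ham L h (flip_minus s x) - Ham L h s = 16 - 4 * INR (n_zero_nbrs L s x) - 2 * h.
Proof.
  intros. unfold flip_plus, flip_minus. rewrite !dH_formula by auto. rewrite H2. unfold spin_up, spin_down. simpl. split; ring.
Qed.

Lemma dH_0 L h s x : (3 <= L)%nat -> In x (sites L) ->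
  (forall w, In w (sites L) -> s w = 0%Z \/ s w = (-1)%Z) -> s x = 0%Z ->
  Ham L h (flip_plus s x) - Ham L h s = 12 - 2 * INR (n_zero_nbrs L s x) - h /\
  Ham L h (flip_minus s x) - Ham L h s = 2 * INR (n_zero_nbrs L s x) - 4 + h.
Proof.
  intros. unfold flip_plus, flip_minus. rewrite !dH_formula by auto. rewrite H2. unfold spin_up, spin_down. simpl. split; ring.
Qed.

Lemma sl_ge {A} (l : list A) f t : In t l -> (forall x, 0 <= f x) -> f t <= sl l f.
Proof.
  induction l; intros Ht Hf; [destruct Ht|]. unfold sl in *; simpl.
  destruct Ht as [->|Ht].
  - pose proof (sl_nonneg l f (fun x _ => Hf x)). unfold sl in H. lra.
  - specialize (IHl Ht Hf). pose proof (Hf a). lra.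
Qed.

Lemma delta_eq x p : delta x p = if site_eqb x p then 1 else 0.
Proof. reflexivity. Qed.

Lemma site_eqb_spec x p : site_eqb x p = true <-> x = p.
Proof. destruct x, p; unfold site_eqb; simpl. rewrite andb_true_iff, !Nat.eqb_eq.
  split; [intros [-> ->]; reflexivity| intros E; inversion E; auto]. Qed.

Lemma delta_1 x : delta x x = 1.
Proof. unfold delta. replace (site_eqb x x) with true; [reflexivity|symmetry; apply site_eqb_spec; auto]. Qed.
Lemma delta_0 x p : x <> p -> delta x p = 0.
Proof. intros. unfold delta. destruct (site_eqb x p) eqn:E; [apply site_eqb_spec in E; contradiction|reflexivity]. Qed.
Lemma delta_nonneg x p : 0 <= delta x p.
Proof. unfold delta; destruct site_eqb; lra. Qed.


Definition BI L a b l1 l2 (x : site) : R :=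
  sl [ (L-2)%nat; (L-1)%nat; 0%nat; (l1-1)%nat; l1; (l1+1)%nat ]
     (fun t => if Nat.eqb (fst x) ((a+t) mod L) then 1 else 0)
  + sl [ (L-2)%nat; (L-1)%nat; 0%nat; (l2-1)%nat; l2; (l2+1)%nat ]
     (fun t => if Nat.eqb (snd x) ((b+t) mod L) then 1 else 0).

Definition CI L a b l1 l2 (x : site) : R :=
  sl [(0,0)%nat; (0,l2-1)%nat; (l1-1,0)%nat; (l1-1,l2-1)%nat]
     (fun p => delta x (((a + fst p) mod L)%nat, ((b + snd p) mod L)%nat)).

Lemma ind_nonneg (c : bool) : 0 <= (if c then 1 else 0).
Proof. destruct c; lra. Qed.

Lemma BI_nonneg L a b l1 l2 x : 0 <= BI L a b l1 l2 x.
Proof. unfold BI. pose proof (sl_nonneg [ (L-2)%nat; (L-1)%nat; 0%nat; (l1-1)%nat; l1; (l1+1)%nat ]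
     (fun t => if Nat.eqb (fst x) ((a+t) mod L) then 1 else 0) (fun t _ => ind_nonneg _)).
  pose proof (sl_nonneg [ (L-2)%nat; (L-1)%nat; 0%nat; (l2-1)%nat; l2; (l2+1)%nat ]
     (fun t => if Nat.eqb (snd x) ((b+t) mod L) then 1 else 0) (fun t _ => ind_nonneg _)). lra. Qed.

Lemma CI_nonneg L a b l1 l2 x : 0 <= CI L a b l1 l2 x.
Proof. unfold CI. apply sl_nonneg. intros; apply delta_nonneg. Qed.

Lemma BI_band L a b l1 l2 i j : (a < L)%nat -> (b < L)%nat -> (i < L)%nat -> (j < L)%nat ->
  bandP L l1 l2 (cu L a i) (cu L b j) -> 1 <= BI L a b l1 l2 (i, j).
Proof.
  intros Ha Hb Hi Hj Hband. unfold BI; cbn [fst snd].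
  set (S1 := sl _ (fun t => if Nat.eqb i ((a+t) mod L) then 1 else 0)).
  set (S2 := sl _ (fun t => if Nat.eqb j ((b+t) mod L) then 1 else 0)).
  assert (P1 : 0 <= S1) by (apply sl_nonneg; intros; apply ind_nonneg).
  assert (P2 : 0 <= S2) by (apply sl_nonneg; intros; apply ind_nonneg).
  assert (Ei := cu_inv2 L a i Ha Hi). assert (Ej := cu_inv2 L b j Hb Hj).
  unfold bandP in Hband.
  assert (G1 : forall t, In t [ (L-2)%nat; (L-1)%nat; 0%nat; (l1-1)%nat; l1; (l1+1)%nat ] ->
             cu L a i = t -> 1 <= S1).
  { intros t Ht Et. unfold S1. rewrite Et in Ei.
    eapply Rle_trans; [|apply (sl_ge _ _ t Ht)]. cbv beta. rewrite <- Ei, Nat.eqb_refl. lra. intros; apply ind_nonneg. }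
  assert (G2 : forall t, In t [ (L-2)%nat; (L-1)%nat; 0%nat; (l2-1)%nat; l2; (l2+1)%nat ] ->
             cu L b j = t -> 1 <= S2).
  { intros t Ht Et. unfold S2. rewrite Et in Ej.
    eapply Rle_trans; [|apply (sl_ge _ _ t Ht)]. cbv beta. rewrite <- Ej, Nat.eqb_refl. lra. intros; apply ind_nonneg. }
  repeat destruct Hband as [Hband|Hband];
  first [ assert (1 <= S1) by (eapply G1; [|exact Hband]; simpl; tauto); lra
        | assert (1 <= S2) by (eapply G2; [|exact Hband]; simpl; tauto); lra ].
Qed.

Lemma CI_corner L a b l1 l2 i j : (a < L)%nat -> (b < L)%nat -> (i < L)%nat -> (j < L)%nat ->
  (cu L a i = 0 \/ cu L a i = l1 - 1)%nat -> (cu L b j = 0 \/ cu L b j = l2 - 1)%nat ->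
  1 <= CI L a b l1 l2 (i, j).
Proof.
  intros Ha Hb Hi Hj Hu Hv. unfold CI.
  assert (Ei := cu_inv2 L a i Ha Hi). assert (Ej := cu_inv2 L b j Hb Hj).
  eapply Rle_trans; [|apply (sl_ge _ _ (cu L a i, cu L b j))].
  - cbn [fst snd]. rewrite <- Ei, <- Ej, delta_1. lra.
  - destruct Hu as [Hu|Hu]; destruct Hv as [Hv|Hv]; rewrite Hu, Hv; simpl; tauto.
  - intros; apply delta_nonneg.
Qed.

Lemma vals01 L a b l1 l2 z s : CFG L a b l1 l2 z s ->
  forall w, In w (sites L) -> s w = 0%Z \/ s w = (-1)%Z.
Proof. intros Hs w Hw. destruct (Hs w Hw) as [H0 H1].
  destruct (classic (inRect L a b l1 l2 w \/ w = z)); [left; auto|right; auto]. Qed.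

Lemma site_bound L h beta a b l1 l2 zi zj y0u y0v s i j :
  0 < h < 1 -> 0 < beta ->
  (a < L)%nat -> (b < L)%nat -> (2 <= l1)%nat -> (2 <= l2)%nat -> (l1 + 3 <= L)%nat -> (l2 + 3 <= L)%nat ->
  (zi < L)%nat -> (zj < L)%nat ->
  ~ inRect L a b l1 l2 (zi, zj) -> CFG L a b l1 l2 (zi, zj) s ->
  zposP L l1 l2 (cu L a zi) (cu L b zj) y0u y0v ->
  (i < L)%nat -> (j < L)%nat ->
  let y0 := (((a + y0u) mod L)%nat, ((b + y0v) mod L)%nat) in
  let rp := rate L h beta s (flip_plus s (i, j)) in
  let rm := rate L h beta s (flip_minus s (i, j)) in
  delta (i, j) (zi, zj) + delta (i, j) y0 <= rp + rm /\
  rp + rm <= delta (i, j) (zi, zj) + delta (i, j) y0 + 2 * exp (- (4 - h) * beta)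
     + 2 * exp (- (2 - h) * beta) * BI L a b l1 l2 (i, j) + 2 * exp (- h * beta) * CI L a b l1 l2 (i, j).
Proof.
  intros Hh Hbeta Ha Hb Hl1 Hl2 HL1 HL2 Hzi Hzj Hz Hs Hzp Hi Hj y0 rp rm.
  assert (HL : (3 <= L)%nat) by lia.
  assert (Hx : In (i, j) (sites L)) by (apply in_sites; auto).
  assert (Hv := vals01 L a b l1 l2 _ s Hs).
  pose proof (classify L a b l1 l2 zi zj y0u y0v s i j Ha Hb Hl1 Hl2 HL1 HL2 Hzi Hzj Hz Hs Hzp Hi Hj) as C.
  cbv zeta in C. fold y0 in C. destruct C as [C1 [C2 [C3 C4]]].
  set (k := n_zero_nbrs L s (i, j)) in *.
  assert (Hk4 : (k <= 4)%nat) by apply nz_le4.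
  assert (Prp : 0 < rp) by apply rate_pos. assert (Prm : 0 < rm) by apply rate_pos.
  assert (E4 : 0 < exp (- (4 - h) * beta)) by apply exp_pos.
  assert (E2 : 0 < exp (- (2 - h) * beta)) by apply exp_pos.
  assert (Eh : 0 < exp (- h * beta)) by apply exp_pos.
  assert (B0 := BI_nonneg L a b l1 l2 (i, j)). assert (C0 := CI_nonneg L a b l1 l2 (i, j)).
  assert (D1 := delta_nonneg (i, j) (zi, zj)). assert (D2 := delta_nonneg (i, j) y0).
  destruct (classic ((i, j) = (zi, zj))) as [Ez|Nz].
  - destruct (C1 Ez) as [S K].
    assert (Ny : (i, j) <> y0) by (intros Ey; destruct (C2 Ey) as [S' _]; congruence).
    rewrite Ez, delta_1. rewrite <- Ez, (delta_0 _ _ Ny).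
    destruct (dH_0 L h s (i, j) HL Hx Hv S) as [Dp Dm]. fold k in Dp, Dm.
    assert (Hk : INR k <= 1) by (apply (le_INR k 1) in K; simpl in K; lra).
    assert (Rm1 : rm = 1) by (apply rate_one; lra).
    assert (Rp4 : rp <= exp (- (4 - h) * beta)) by (apply rate_le; [lra| pose proof (pos_INR k); lra]).
    nra.
  - rewrite (delta_0 _ _ Nz).
    destruct (classic ((i, j) = y0)) as [Ey|Ny].
    + destruct (C2 Ey) as [S K]. rewrite Ey, delta_1. rewrite <- Ey.
      destruct (dH_m1 L h s (i, j) HL Hx Hv S) as [Dp Dm]. fold k in Dp, Dm.
      rewrite K in Dp, Dm. simpl INR in Dp, Dm.
      assert (Rp1 : rp = 1) by (apply rate_one; lra).
      assert (Rm4 : rm <= exp (- (4 - h) * beta)) by (apply rate_le; lra).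
      nra.
    + rewrite (delta_0 _ _ Ny). split; [lra|].
      destruct (Hv (i, j) Hx) as [S|S].
      * destruct (C4 Nz S) as [K2 [Kc Kb]].
        destruct (dH_0 L h s (i, j) HL Hx Hv S) as [Dp Dm]. fold k in Dp, Dm.
        assert (k = 2%nat \/ k = 3%nat \/ k = 4%nat)%nat as [K|[K|K]] by lia; rewrite K in Dp, Dm; simpl INR in Dp, Dm.
        -- assert (CI1 := CI_corner L a b l1 l2 i j Ha Hb Hi Hj (proj1 (Kc K)) (proj2 (Kc K))).
           assert (rp <= exp (- h * beta)) by (apply rate_le; lra).
           assert (rm <= exp (- h * beta)) by (apply rate_le; lra).
           nra.
        -- assert (BI1 := BI_band L a b l1 l2 i j Ha Hb Hi Hj (Kb ltac:(lia))).
           assert (rp <= exp (- (2 - h) * beta)) by (apply rate_le; lra).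
           assert (rm <= exp (- (2 - h) * beta)) by (apply rate_le; lra).
           nra.
        -- assert (rp <= exp (- (4 - h) * beta)) by (apply rate_le; lra).
           assert (rm <= exp (- (4 - h) * beta)) by (apply rate_le; lra).
           nra.
      * destruct (C3 Nz Ny S) as [K1 Kb].
        destruct (dH_m1 L h s (i, j) HL Hx Hv S) as [Dp Dm]. fold k in Dp, Dm.
        assert (k = 0%nat \/ k = 1%nat)%nat as [K|K] by lia; rewrite K in Dp, Dm; simpl INR in Dp, Dm.
        -- assert (rp <= exp (- (4 - h) * beta)) by (apply rate_le; lra).
           assert (rm <= exp (- (4 - h) * beta)) by (apply rate_le; lra).
           nra.
        -- assert (BI1 := BI_band L a b l1 l2 i j Ha Hb Hi Hj (Kb K)).
           assert (rp <= exp (- (2 - h) * beta)) by (apply rate_le; lra).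
           assert (rm <= exp (- (2 - h) * beta)) by (apply rate_le; lra).
           nra.
Qed.

Lemma sumL_sl_exch {T} L (l : list T) (g : site -> T -> R) :
  sumL L (fun x => sl l (fun t => g x t)) = sl l (fun t => sumL L (fun x => g x t)).
Proof.
  induction l.
  - unfold sl at 2; simpl. rewrite (sumL_ext L _ (fun _ => 0)) by (intros; reflexivity).
    rewrite sumL_const. lra.
  - unfold sl in *. simpl. rewrite sumL_plus. rewrite IHl. reflexivity.
Qed.

Lemma abs_bound H E : 2 <= H -> H <= 2 + E -> Rabs (1 / H - 1 / 2) <= E / 4.
Proof.
  intros H1 H2. assert (Hq : 1 / H * H = 1) by (field; lra).
  assert (Hq0 : 0 < 1 / H) by (apply Rdiv_lt_0_compat; lra).
  apply Rabs_le. split; nra.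
Qed.

Theorem mainTheorem16 (h : R) :
  0 < h < 1 ->
  (forall k : Z, 2 / h <> IZR k) ->
  exists C0 : R,
  forall (L n m : nat) (s : config) (a b l1 l2 : nat) (z : site) (beta : R),
    (n0 h <= m)%nat -> (m <= n)%nat -> (n + 3 <= L)%nat ->
    0 < beta ->
    ((l1 = n /\ l2 = m) \/ (l1 = m /\ l2 = n)) ->
    (a < L)%nat -> (b < L)%nat ->
    In z (sites L) -> ~ inRect L a b l1 l2 z ->
    (exists c, isCorner L a b l1 l2 c /\ inRect L a b l1 l2 c /\ adj L z c /\
       forall y, inRect L a b l1 l2 y -> adj L z y -> y = c) ->
    (forall x, In x (sites L) ->
       ((inRect L a b l1 l2 x \/ x = z) -> s x = 0%Z) /\
       (~ (inRect L a b l1 l2 x \/ x = z) -> s x = (-1)%Z)) ->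
    Rabs (jump_prob L h beta s (update s z (-1)%Z) - 1 / 2) <= C0 * delta1 L h beta
    /\
    (forall y, In y (sites L) -> s y = (-1)%Z -> n_zero_nbrs L s y = 2%nat ->
       Rabs (jump_prob L h beta s (update s y 0%Z) - 1 / 2) <= C0 * delta1 L h beta).
Proof.
  intros Hh _. exists 6.
  intros L n m s a b l1 l2 z beta Hn0 Hmn HnL Hbeta Hl Ha Hb Hzin Hnz Hc Hs.
  assert (Hm2 := n0_ge2 h Hh).
  assert (Hl1 : (2 <= l1)%nat) by lia. assert (Hl2 : (2 <= l2)%nat) by lia.
  assert (HL1 : (l1 + 3 <= L)%nat) by lia. assert (HL2 : (l2 + 3 <= L)%nat) by lia.
  assert (HL : (3 <= L)%nat) by lia.
  destruct z as [zi zj]. apply in_sites in Hzin as [Hzi Hzj].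
  assert (HCFG : CFG L a b l1 l2 (zi, zj) s) by exact Hs.
  destruct Hc as [c [Hcor [_ [Hadj _]]]].
  destruct Hcor as [i' [j' [Hi' [Hj' Ec]]]].
  assert (Cu : cu L a (fst c) = i') by (rewrite Ec; simpl; apply cu_inv; lia).
  assert (Cv : cu L b (snd c) = j') by (rewrite Ec; simpl; apply cu_inv; lia).
  assert (Had : ((i' = nup L (cu L a zi) /\ j' = cu L b zj) \/ (i' = ndn L (cu L a zi) /\ j' = cu L b zj) \/
                 (i' = cu L a zi /\ j' = nup L (cu L b zj)) \/ (i' = cu L a zi /\ j' = ndn L (cu L b zj)))%nat).
  { unfold adj, nbrs in Hadj. rewrite <- Cu, <- Cv.
    destruct Hadj as [E|[E|[E|[E|[]]]]]; rewrite <- E; simpl.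
    - left. rewrite cu_up by lia. auto.
    - right; left. rewrite cu_dn by lia. auto.
    - right; right; left. rewrite cu_up by lia. auto.
    - right; right; right. rewrite cu_dn by lia. auto. }
  assert (HnR : ~ ((cu L a zi < l1)%nat /\ (cu L b zj < l2)%nat)) by (rewrite <- inRect_iff; auto; lia).
  destruct (zpos_exists L l1 l2 (cu L a zi) (cu L b zj) i' j' Hl1 Hl2 HL1 HL2
              ltac:(apply cu_lt; lia) ltac:(apply cu_lt; lia) Hi' Hj' Had HnR) as [y0u [y0v Hzp]].
  assert (HY := Core_y0 L l1 l2 _ _ _ _ Hl1 Hl2 HL1 HL2 Hzp).
  destruct HY as [Y1 [Y2 _]].
  set (y0 := (((a + y0u) mod L)%nat, ((b + y0v) mod L)%nat)).
  assert (Hy0in : In y0 (sites L)) by (apply in_sites; split; apply addmod_lt; lia).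
  assert (Hzin : In (zi, zj) (sites L)) by (apply in_sites; auto).
  set (c4 := exp (- (4 - h) * beta)). set (c2 := exp (- (2 - h) * beta)). set (ch := exp (- h * beta)).
  set (Hd := hold_rate L h beta s).
  assert (Hlow : 2 <= Hd).
  { unfold Hd, hold_rate.
    eapply Rle_trans; [|apply (sumL_le L (fun x => delta x (zi, zj) + delta x y0))].
    - rewrite sumL_plus, !sumL_delta by auto. lra.
    - intros [i j] Hx. apply in_sites in Hx as [Hi Hj].
      exact (proj1 (site_bound L h beta a b l1 l2 zi zj y0u y0v s i j Hh Hbeta Ha Hb Hl1 Hl2 HL1 HL2
                      Hzi Hzj Hnz HCFG Hzp Hi Hj)). }
  assert (Hup : Hd <= 2 + (2 * INR L * INR L * c4 + 24 * INR L * c2 + 8 * ch)).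
  { unfold Hd, hold_rate.
    eapply Rle_trans; [apply (sumL_le L _ (fun x => delta x (zi, zj) + delta x y0 + 2 * c4
       + 2 * c2 * BI L a b l1 l2 x + 2 * ch * CI L a b l1 l2 x))|].
    - intros [i j] Hx. apply in_sites in Hx as [Hi Hj].
      exact (proj2 (site_bound L h beta a b l1 l2 zi zj y0u y0v s i j Hh Hbeta Ha Hb Hl1 Hl2 HL1 HL2
                      Hzi Hzj Hnz HCFG Hzp Hi Hj)).
    - rewrite !sumL_plus, !sumL_delta by auto. rewrite sumL_const, !sumL_scal.
      assert (SB : sumL L (BI L a b l1 l2) <= 12 * INR L).
      { unfold BI. rewrite sumL_plus.
        rewrite (sumL_sl_exch L _ (fun x t => if Nat.eqb (fst x) ((a+t) mod L) then 1 else 0)).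
        rewrite (sumL_sl_exch L _ (fun x t => if Nat.eqb (snd x) ((b+t) mod L) then 1 else 0)).
        eapply Rle_trans; [apply Rplus_le_compat; apply sl_le; intros; [apply sumL_row|apply sumL_col]|].
        rewrite !sl_const. simpl. lra. }
      assert (SC : sumL L (CI L a b l1 l2) <= 4).
      { unfold CI. rewrite (sumL_sl_exch L _ (fun x p => delta x (((a + fst p) mod L)%nat, ((b + snd p) mod L)%nat))).
        rewrite (sl_ext _ _ (fun _ => 1)).
        - rewrite sl_const. simpl. lra.
        - intros p _. apply sumL_delta. apply in_sites; split; apply addmod_lt; lia. }
      assert (0 < c2) by apply exp_pos. assert (0 < ch) by apply exp_pos. nra. }
  assert (Hdelta : delta1 L h beta = ch + INR L * c2 + INR L * INR L * c4).
  { unfold delta1, ch, c2, c4. rewrite mult_INR, sqrt_square by apply pos_INR. reflexivity. }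
  assert (Hfin : forall r, r = 1 -> Rabs (r / Hd - 1 / 2) <= 6 * delta1 L h beta).
  { intros r ->. eapply Rle_trans; [apply (abs_bound Hd _ Hlow Hup)|].
    rewrite Hdelta. assert (0 < c4) by apply exp_pos. assert (0 < c2) by apply exp_pos.
    assert (0 < ch) by apply exp_pos. pose proof (pos_INR L). nra. }
  assert (Hv := vals01 L a b l1 l2 _ s HCFG).
  split.
  - unfold jump_prob. fold Hd. apply Hfin.
    assert (C := classify L a b l1 l2 zi zj y0u y0v s zi zj Ha Hb Hl1 Hl2 HL1 HL2 Hzi Hzj Hnz HCFG Hzp Hzi Hzj).
    cbv zeta in C. destruct C as [C1 _]. destruct (C1 eq_refl) as [S K].
    replace (update s (zi, zj) (-1)%Z) with (flip_minus s (zi, zj))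
      by (unfold flip_minus; rewrite S; reflexivity).
    apply rate_one. destruct (dH_0 L h s (zi, zj) HL Hzin Hv S) as [_ Dm].
    apply (le_INR _ 1) in K. simpl in K. lra.
  - intros [yi yj] Hyin Sy Ky. unfold jump_prob. fold Hd. apply Hfin.
    apply in_sites in Hyin as [Hyi Hyj].
    assert (C := classify L a b l1 l2 zi zj y0u y0v s yi yj Ha Hb Hl1 Hl2 HL1 HL2 Hzi Hzj Hnz HCFG Hzp Hyi Hyj).
    cbv zeta in C. fold y0 in C. destruct C as [C1 [C2 [C3 C4]]].
    assert (Ny : (yi, yj) <> (zi, zj)) by (intros E; destruct (C1 E); congruence).
    assert (Ey : (yi, yj) = y0).
    { destruct (classic ((yi, yj) = y0)) as [E|E]; auto. destruct (C3 Ny E Sy). lia. }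
    replace (update s (yi, yj) 0%Z) with (flip_plus s (yi, yj))
      by (unfold flip_plus; rewrite Sy; reflexivity).
    apply rate_one. destruct (dH_m1 L h s (yi, yj) HL ltac:(apply in_sites; auto) Hv Sy) as [Dp _].
    rewrite Ky in Dp. simpl in Dp. lra.
Qed.
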